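(* Let $L$ be a linear continuum with endpoints, let $(f_i:i\in I)$ be an indiscernible sequence of single elements of $M_L$ (indexed by a linear order $I$), and let $(a_i:i\in I)\in\mathrm{im}(f_i:i\in I)$. Then $(a_i:i\in I)$ is either nondecreasing or nonincreasing in $i$.
   Context: A linear continuum is a dense linear order with the least upper bound property; with endpoints means it has a least and greatest element. $M_L$ is the set of functions $f:L\to[0,1]$ that are nondecreasing, continuous in the order topology, with $\inf f=0$ and $\sup f=1$, with the sup metric, regarded as a metric structure in the language of binary predicates $\varphi_\alpha$ ($\alpha\in\mathbb{Q}\cap[0,1]$), where $\varphi_\alpha(f,g)=f(t)$ for any $t\in L$ with $f(t)+g(t)=\alpha$ (independent of the choice of $t$). $\mathrm{im}(f_i:i\in I)=\{(f_i(t))_{i\in I}:t\in L\}$. A sequence is indiscernible if every formula takes the same value on all increasing tuples from it. *)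

(* Defs.v *)
From mathcomp Require Import all_boot all_order all_algebra.
From mathcomp Require Import all_classical all_reals.
Set Implicit Arguments. Unset Strict Implicit. Unset Printing Implicit Defensive.
Import Order.TTheory GRing.Theory Num.Theory.
Local Open Scope classical_set_scope.
Local Open Scope ring_scope.

Section LinearContinuum.
Context {d : Order.disp_t} (T : orderType d).

Definition dense_order := forall x y : T, (x < y)%O -> exists z : T, (x < z)%O /\ (z < y)%O.

Definition lub_property :=
  forall A : set T, A !=set0 -> (exists b, forall x, A x -> (x <= b)%O) ->
  exists s, (forall x, A x -> (x <= s)%O) /\
            (forall b, (forall x, A x -> (x <= b)%O) -> (s <= b)%O).

Definition has_endpoints :=
  (exists b : T, forall x, (b <= x)%O) /\ (exists t : T, forall x, (x <= t)%O).

Definition linear_continuum_with_endpoints :=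
  [/\ dense_order, lub_property & has_endpoints].

(* Basic open sets of the order topology: intervals (a,b), where a missing
   endpoint (None) means the ray is unbounded on that side. *)
Definition in_order_interval (a b : option T) (y : T) : bool :=
  (if a is Some a' then (a' < y)%O else true) &&
  (if b is Some b' then (y < b')%O else true).
End LinearContinuum.

Section ML.
Context (R : realType) {d : Order.disp_t} (L : orderType d).

Definition order_continuous (f : L -> R) :=
  forall (t : L) (e : R), 0 < e -> exists a b : option L,
    in_order_interval a b t /\
    forall y, in_order_interval a b y -> `|f y - f t| < e.

Definition inML (f : L -> R) :=
  [/\ (forall t, 0 <= f t <= 1),
      (forall x y, (x <= y)%O -> f x <= f y),
      order_continuous f,
      inf (range f) = 0 &
      sup (range f) = 1].

Definition ML := {f : L -> R | inML f}.

(* phi_alpha(f,g) = f(t) for any t with f(t)+g(t) = alpha (the value is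
   independent of t, so we take the supremum of the common value) *)
Definition phi_val (f g : ML) (α : R) : R :=
  sup ((sval f) @` [set t | sval f t + sval g t = α]).

Definition dist_val (f g : ML) : R :=
  sup (range (fun t => `|sval f t - sval g t|)).
End ML.

(* Continuous-logic formulas in the language {phi_alpha : alpha in Q cap [0,1]}
   (plus the metric d), with the standard full set of connectives
   0, 1, 1-x, x/2, truncated subtraction, and quantifiers sup/inf. *)
Inductive formula : Type :=
| FPhi (α : {q : rat | 0 <= q <= 1}) (i j : nat)
| FDist (i j : nat)
| FZero
| FOne
| FNeg (φ : formula)
| FHalf (φ : formula)
| FMinus (φ ψ : formula)
| FSup (k : nat) (φ : formula)
| FInf (k : nat) (φ : formula).

Fixpoint fv (φ : formula) : seq nat :=
  match φ with
  | FPhi _ i j => [:: i; j]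
  | FDist i j => [:: i; j]
  | FZero | FOne => [::]
  | FNeg φ | FHalf φ => fv φ
  | FMinus φ ψ => fv φ ++ fv ψ
  | FSup k φ | FInf k φ => [seq m <- fv φ | m != k]
  end.

Definition upd {X : Type} (env : nat -> X) (k : nat) (x : X) : nat -> X :=
  fun m => if m == k then x else env m.

Fixpoint eval (R : realType) {d : Order.disp_t} (L : orderType d)
  (env : nat -> ML R L) (φ : formula) : R :=
  match φ with
  | FPhi α i j => phi_val (env i) (env j) (ratr (sval α))
  | FDist i j => dist_val (env i) (env j)
  | FZero => 0
  | FOne => 1
  | FNeg φ => 1 - eval env φ
  | FHalf φ => eval env φ / 2
  | FMinus φ ψ => Num.max (eval env φ - eval env ψ) 0
  | FSup k φ => sup (range (fun g : ML R L => eval (upd env k g) φ))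
  | FInf k φ => inf (range (fun g : ML R L => eval (upd env k g) φ))
  end.

Definition indiscernible (R : realType) {d : Order.disp_t} (L : orderType d)
  {dI : Order.disp_t} (I : orderType dI) (f : I -> ML R L) :=
  forall (φ : formula) (n : nat) (s s' : nat -> I),
    all (fun k => (k < n)%N) (fv φ) ->
    (forall a b, (a < b < n)%N -> (s a < s b)%O) ->
    (forall a b, (a < b < n)%N -> (s' a < s' b)%O) ->
    eval (fun k => f (s k)) φ = eval (fun k => f (s' k)) φ.

(* Main.v *)
Require Import Defs.
From mathcomp Require Import all_boot all_order all_algebra.
From mathcomp Require Import all_classical all_reals.
From mathcomp Require Import ring lra.
Import Order.TTheory GRing.Theory Num.Theory.
Local Open Scope ring_scope.
Local Open Scope classical_set_scope.

Definition chiF (α β c1 c2 : {q : rat | 0 <= q <= 1}) : formula :=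
  let a := FMinus (FHalf (FPhi α 2 0)) (FPhi c1 0 0) in
  let b := FMinus (FHalf (FPhi β 1 2)) (FPhi c2 0 0) in
  FMinus a (FMinus a b).

Section Aux.
Variable R : realType.
Variables (dL : Order.disp_t) (L : orderType dL).

Lemma ML_range (f : ML R L) t : 0 <= sval f t <= 1.
Proof. by case: f => f [] /=. Qed.

Lemma ML_mono (f : ML R L) x y : (x <= y)%O -> sval f x <= sval f y.
Proof. by case: f => f [] /= _ H *; apply: H. Qed.

Lemma ML_cont (f : ML R L) : order_continuous (sval f).
Proof. by case: f => f []. Qed.

Lemma ML_bot (f : ML R L) (bot : L) : (forall x, (bot <= x)%O) -> sval f bot = 0.
Proof.
move=> hb; case: f => f [H1 H2 H3 H4 H5] /=; rewrite -H4.
apply/eqP; rewrite eq_le; apply/andP; split.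
  apply: lb_le_inf; first by exists (f bot), bot.
  by move=> _ [x _ <-]; apply: H2.
have : lbound (range f) (inf (range f)).
  apply: ge_inf; exists 0 => _ [x _ <-]; by case/andP: (H1 x).
by apply; exists bot.
Qed.

Lemma ML_top (f : ML R L) (top : L) : (forall x, (x <= top)%O) -> sval f top = 1.
Proof.
move=> hb; case: f => f [H1 H2 H3 H4 H5] /=; rewrite -H5.
apply/eqP; rewrite eq_le; apply/andP; split; last first.
  apply: ge_sup; first by exists (f top), top.
  by move=> _ [x _ <-]; apply: H2.
have : ubound (range f) (sup (range f)).
  apply: ub_le_sup; exists 1 => _ [x _ <-]; by case/andP: (H1 x).
by apply; exists top.
Qed.

Definition omax (a1 a2 : option L) : option L :=
  match a1, a2 with
  | Some x, Some y => Some (Order.max x y)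
  | Some x, None => Some x
  | None, o => o end.
Definition omin (a1 a2 : option L) : option L :=
  match a1, a2 with
  | Some x, Some y => Some (Order.min x y)
  | Some x, None => Some x
  | None, o => o end.

Lemma in_itv_meet a1 b1 a2 b2 y :
  in_order_interval (omax a1 a2) (omin b1 b2) y =
  in_order_interval a1 b1 y && in_order_interval a2 b2 y.
Proof.
rewrite /in_order_interval.
case: a1 => [a1|]; case: a2 => [a2|]; case: b1 => [b1|]; case: b2 => [b2|] /=;
  rewrite ?gt_max ?lt_min; do ?[case: (_ < _)%O]; by [].
Qed.

Lemma oc_add (f g : L -> R) : order_continuous f -> order_continuous g ->
  order_continuous (fun t => f t + g t).
Proof.
move=> cf cg t e e0.
have e2 : 0 < e / 2 by rewrite divr_gt0.
have [a1 [b1 [h1 H1]]] := cf t _ e2.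
have [a2 [b2 [h2 H2]]] := cg t _ e2.
exists (omax a1 a2), (omin b1 b2); split; first by rewrite in_itv_meet h1 h2.
move=> y; rewrite in_itv_meet => /andP[/H1 k1 /H2 k2].
have -> : f y + g y - (f t + g t) = (f y - f t) + (g y - g t) by ring.
apply: (le_lt_trans (ler_normD _ _)).
have -> : e = e / 2 + e / 2 by field.
by apply: ltrD.
Qed.

Definition clamp (u : R) : R := if u <= 0 then 0 else if 1 <= u then 1 else u.

Lemma clamp_lip u w : `|clamp u - clamp w| <= `|u - w|.
Proof.
have h1 := ler_norm (u - w); have h2 := ler_norm (w - u).
rewrite distrC in h2; move: h1 h2; move: `|u - w| => n h1 h2.
rewrite ler_norml /clamp.
by case: (lerP u 0) => hu; case: (lerP 1 u) => hu1; case: (lerP w 0) => hw;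
  case: (lerP 1 w) => hw1; apply/andP; split; lra.
Qed.

Lemma clamp_mono u w : u <= w -> clamp u <= clamp w.
Proof.
rewrite /clamp => h.
by case: (lerP u 0) => hu; case: (lerP 1 u) => hu1; case: (lerP w 0) => hw;
  case: (lerP 1 w) => hw1; lra.
Qed.

Lemma clamp_range u : 0 <= clamp u <= 1.
Proof.
rewrite /clamp.
by case: (lerP u 0) => hu; case: (lerP 1 u) => hu1; apply/andP; split; lra.
Qed.

Lemma clamp_le0 u : u <= 0 -> clamp u = 0.
Proof. by rewrite /clamp => ->. Qed.

Lemma clamp_ge1 u : 1 <= u -> clamp u = 1.
Proof. by rewrite /clamp => h; rewrite h; case: (lerP u 0) => hu //; lra. Qed.

Definition hfun (x : ML R L) (M r : R) : L -> R :=
  fun t => clamp (M * (sval x t - r)).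

Lemma hfun_ML (x : ML R L) (M r : R) : 0 < M ->
  (exists t, sval x t <= r) -> (exists t, 1 <= M * (sval x t - r)) ->
  inML (hfun x M r).
Proof.
move=> M0 [t0 ht0] [t1 ht1]; split.
- by move=> t; apply: clamp_range.
- move=> a b ab; apply: clamp_mono; apply: ler_wpM2l; first exact: ltW.
  by rewrite lerD2r; apply: ML_mono.
- move=> t e e0.
  have eM : 0 < e / M by rewrite divr_gt0.
  have [a [b [h H]]] := ML_cont x t _ eM.
  exists a, b; split => // y /H hy.
  apply: (le_lt_trans (clamp_lip _ _)).
  have -> : M * (sval x y - r) - M * (sval x t - r) = M * (sval x y - sval x t) by ring.
  rewrite normrM gtr0_norm // -ltr_pdivlMl // mulrC; exact: hy.
- have h0 : hfun x M r t0 = 0.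
    by apply: clamp_le0; rewrite pmulr_rle0 // subr_le0.
  apply/eqP; rewrite eq_le; apply/andP; split.
    have : lbound (range (hfun x M r)) (inf (range (hfun x M r))).
      apply: ge_inf; exists 0 => _ [y _ <-]; by case/andP: (clamp_range (M * (sval x y - r))).
    by move/(_ 0); rewrite -h0; apply; exists t0.
  apply: lb_le_inf; first by exists (hfun x M r t0), t0.
  by move=> _ [y _ <-]; case/andP: (clamp_range (M * (sval x y - r))).
- have h1 : hfun x M r t1 = 1 by apply: clamp_ge1.
  apply/eqP; rewrite eq_le; apply/andP; split.
    apply: ge_sup; first by exists (hfun x M r t1), t1.
    by move=> _ [y _ <-]; case/andP: (clamp_range (M * (sval x y - r))).
  have : ubound (range (hfun x M r)) (sup (range (hfun x M r))).
    apply: ub_le_sup; exists 1 => _ [y _ <-]; by case/andP: (clamp_range (M * (sval x y - r))).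
  by move/(_ 1); rewrite -h1; apply; exists t1.
Qed.

Lemma phi_range (f g : ML R L) α : 0 <= phi_val f g α <= 1.
Proof.
rewrite /phi_val; set E := (X in sup X).
have [->|ne] := eqVneq E set0; first by rewrite sup0 lexx ler01.
have /set0P [y Ey] := ne.
apply/andP; split.
  apply: (le_trans _ (ub_le_sup _ Ey)).
    by case: Ey => t _ <-; case/andP: (ML_range f t).
  by exists 1 => _ [t _ <-]; case/andP: (ML_range f t).
by apply: ge_sup; [exists y | move=> _ [t _ <-]; case/andP: (ML_range f t)].
Qed.

Lemma phi_ge (f g : ML R L) α t : sval f t + sval g t = α -> sval f t <= phi_val f g α.
Proof.
move=> h; apply: ub_le_sup; last by exists t.
by exists 1 => _ [u _ <-]; case/andP: (ML_range f u).
Qed.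

Lemma phi_gt (f g : ML R L) α c : 0 <= c -> c < phi_val f g α ->
  exists t, sval f t + sval g t = α /\ c < sval f t.
Proof.
rewrite /phi_val; set E := (X in sup X) => c0.
have [->|ne] := eqVneq E set0; first by rewrite sup0; lra.
have /set0P ne' := ne.
move/(sup_gt ne') => [_ [t ht <-] ct]; by exists t.
Qed.

Hypothesis dense : dense_order L.
Hypothesis lub : lub_property L.
Variables (bot top : L).
Hypotheses (hbot : forall x, (bot <= x)%O) (htop : forall x, (x <= top)%O).

Lemma ivt (F : L -> R) v : order_continuous F -> F bot <= v -> v <= F top ->
  exists t, F t = v.
Proof.
move=> cF Fb Ft.
pose S : set L := [set t | F t <= v].
have [s [s_ub s_least]] : exists s, (forall x, S x -> (x <= s)%O) /\
            (forall b, (forall x, S x -> (x <= b)%O) -> (s <= b)%O).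
  apply: lub; first by exists bot.
  by exists top => x _; apply: htop.
exists s; apply/eqP; rewrite eq_le; apply/andP; split.
  rewrite leNgt; apply/negP => Hlt.
  have e0 : 0 < F s - v by rewrite subr_gt0.
  have [a [b [hs H]]] := cF s _ e0.
  case: a hs H => [a'|] hs H; last first.
    have : in_order_interval None b bot.
      rewrite /in_order_interval /=.
      case: b hs {H} => [b'|] //= hs; exact: (le_lt_trans (hbot s) hs).
    move/H; have := Fb; move: (F bot) => u; rewrite ltr_norml; lra.
  have sa : (s <= a')%O.
    apply: s_least => x Sx; rewrite leNgt; apply/negP => ax.
    have : in_order_interval (Some a') b x.
      move: hs; rewrite /in_order_interval /= ax /=.
      case: b {H} => [b'|] //= /andP[_ sb]; exact: (le_lt_trans (s_ub x Sx) sb).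
    move/H; move: Sx; rewrite /S /=; move: (F x) => u; rewrite ltr_norml; lra.
  by move/andP: hs => [as' _]; move: sa; rewrite leNgt as'.
rewrite leNgt; apply/negP => Hlt.
have e0 : 0 < v - F s by rewrite subr_gt0.
have [a [b [hs H]]] := cF s _ e0.
have [z [sz zin]] : exists z, (s < z)%O /\ in_order_interval a b z.
  case: b hs {H} => [b'|] hs.
    have /andP[ha sb] := hs.
    have [z [z1 z2]] := dense _ _ sb.
    exists z; split => //; rewrite /in_order_interval z2 andbT.
    by case: a ha {hs} => //= a' ha; exact: (lt_trans ha).
  have stop : (s < top)%O.
    rewrite lt_neqAle htop andbT; apply/eqP => st.
    by move: Hlt Ft; rewrite st; lra.
  exists top; split => //; rewrite /in_order_interval andbT.
  by case/andP: hs; case: a => //= a' ha _; exact: (lt_trans ha).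
have hz := H z zin.
have Sz : S z.
  rewrite /S /=; move: hz; move: (F z) => u; rewrite ltr_norml; lra.
by have := s_ub z Sz; rewrite leNgt sz.
Qed.

Lemma phi_const (x : ML R L) (c : R) : 0 <= c <= 1 -> phi_val x x c = c / 2.
Proof.
move=> /andP[c0 c1].
have [t ht] : exists t, sval x t + sval x t = c.
  apply: ivt; first exact: oc_add (ML_cont x) (ML_cont x).
    by rewrite ML_bot // addr0.
  by rewrite ML_top //; lra.
apply/eqP; rewrite eq_le; apply/andP; split.
  apply: ge_sup; first by exists (sval x t), t.
  by move=> _ [u hu <-]; move: hu => /= hu; lra.
have := @phi_ge x x _ _ ht; lra.
Qed.

Definition chiv (A B C1 C2 : R) : R :=
  let a := Num.max (A / 2 - C1) 0 in
  let b := Num.max (B / 2 - C2) 0 in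
  Num.max (a - Num.max (a - b) 0) 0.

Lemma eval_chi (env : nat -> ML R L) (g : ML R L) α β c1 c2 :
  eval (upd env 2 g) (chiF α β c1 c2) =
  chiv (phi_val g (env 0%N) (ratr (sval α))) (phi_val (env 1%N) g (ratr (sval β)))
       (phi_val (env 0%N) (env 0%N) (ratr (sval c1)))
       (phi_val (env 0%N) (env 0%N) (ratr (sval c2))).
Proof. reflexivity. Qed.

Lemma chiv_le1 A B C1 C2 : A <= 1 -> 0 <= C1 -> chiv A B C1 C2 <= 1.
Proof.
move=> A1 C0; rewrite /chiv.
set a := Num.max (A / 2 - C1) 0; set b := Num.max (B / 2 - C2) 0.
have a1 : a <= 1 by rewrite /a; case: (leP (A / 2 - C1) 0) => ?; lra.
case: (leP (a - b) 0) => ?; case: (leP (a - (a - b)) 0) => ?; case: (leP (a - 0) 0) => ?; lra.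
Qed.

Lemma chiv_pos A B C1 C2 : C1 < A / 2 -> C2 < B / 2 -> 0 < chiv A B C1 C2.
Proof.
move=> hA hB; rewrite /chiv.
set a := Num.max (A / 2 - C1) 0; set b := Num.max (B / 2 - C2) 0.
have a0 : 0 < a by rewrite /a; case: (leP (A / 2 - C1) 0) => ?; lra.
have b0 : 0 < b by rewrite /b; case: (leP (B / 2 - C2) 0) => ?; lra.
case: (leP (a - b) 0) => ?; case: (leP (a - (a - b)) 0) => ?; case: (leP (a - 0) 0) => ?; lra.
Qed.

Lemma chiv_zero A B C1 C2 : A / 2 <= C1 \/ B / 2 <= C2 -> chiv A B C1 C2 = 0.
Proof.
move=> h; rewrite /chiv.
set a := Num.max (A / 2 - C1) 0; set b := Num.max (B / 2 - C2) 0.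
have a0 : 0 <= a by rewrite /a; case: (leP (A / 2 - C1) 0) => ?; lra.
have b0 : 0 <= b by rewrite /b; case: (leP (B / 2 - C2) 0) => ?; lra.
have : a = 0 \/ b = 0.
  case: h => h; [left; rewrite /a; case: (leP (A / 2 - C1) 0) | right; rewrite /b; case: (leP (B / 2 - C2) 0)] => ?; lra.
case: (leP (a - b) 0) => ?; case: (leP (a - (a - b)) 0) => ?; case: (leP (a - 0) 0) => ?; lra.
Qed.

Lemma ratr01 (q : {q : rat | 0 <= q <= 1}) : 0 <= (ratr (sval q) : R) <= 1.
Proof.
case: q => q /= /andP[q0 q1].
by rewrite -(ler_rat R) rmorph0 in q0; rewrite -(ler_rat R) rmorph1 in q1; rewrite q0 q1.
Qed.

Lemma chi_ub (env : nat -> ML R L) α β c1 c2 :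
  has_ubound (range (fun g : ML R L => eval (upd env 2 g) (chiF α β c1 c2))).
Proof.
exists 1 => _ [g _ <-]; rewrite eval_chi; apply: chiv_le1.
  by case/andP: (phi_range g (env 0%N) (ratr (sval α))).
by case/andP: (phi_range (env 0%N) (env 0%N) (ratr (sval c1))).
Qed.

Lemma psi_pos (env : nat -> ML R L) t1 α β c1 c2 (δ : R) :
  0 < δ -> sval (env 0%N) t1 + δ <= 1 ->
  ratr (sval c1) < ratr (sval α) - sval (env 0%N) t1 - δ ->
  (ratr (sval c2) : R) < ratr (sval β) -> ratr (sval β) <= sval (env 1%N) t1 ->
  0 < eval env (FSup 2 (chiF α β c1 c2)).
Proof.
move=> δ0 r1δ hc1 hc2 hb.
have /andP[a0 a1] := ratr01 α; have /andP[b0 b1] := ratr01 β.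
have /andP[k10 k11] := ratr01 c1; have /andP[k20 k21] := ratr01 c2.
have /andP[r10 r11] := ML_range (env 0%N) t1.
set x := env 0%N in r1δ hc1 hb r10 r11 *; set y := env 1%N in hb *.
set a := @ratr R (sval α) in hc1 a0 a1 *; set b := @ratr R (sval β) in hc2 hb b0 b1 *.
set k1 := @ratr R (sval c1) in hc1 k10 k11 *; set k2 := @ratr R (sval c2) in hc2 k20 k21 *.
set r1 := sval x t1 in r1δ hc1 r10 r11 *.
pose M := δ^-1.
have M0 : 0 < M by rewrite invr_gt0.
have hML : inML (hfun x M r1).
  apply: hfun_ML => //; first by exists t1.
  exists top; rewrite ML_top // /M mulrC ler_pdivlMr // mul1r; lra.
pose h : ML R L := exist _ (hfun x M r1) hML.
have hE t : sval h t = clamp (M * (sval x t - r1)) by [].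
have key : 0 < eval (upd env 2 h) (chiF α β c1 c2).
  rewrite eval_chi !phi_const ?ratr01 //; apply: chiv_pos.
  - have [ta hta] : exists t, sval h t + sval x t = a.
      apply: ivt; first exact: oc_add (ML_cont h) (ML_cont x).
        by rewrite !ML_bot // addr0.
      by rewrite !ML_top //; lra.
    have hx : sval x ta <= r1 + δ.
      rewrite leNgt; apply/negP => hlt.
      have : sval h ta = 1.
        rewrite hE; apply: clamp_ge1.
        rewrite /M mulrC ler_pdivlMr // mul1r; lra.
      lra.
    have := @phi_ge h x a ta hta; rewrite -/(phi_val h x a) /= in hta *.
    change (phi_val h (env 0%N) a) with (phi_val h x a); lra.
  - have [tb htb] : exists t, sval y t + sval h t = b.
      apply: ivt; first exact: oc_add (ML_cont y) (ML_cont h).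
        by rewrite !ML_bot // addr0.
      by rewrite !ML_top //; lra.
    have hy : b <= sval y tb.
      case/orP: (le_total tb t1) => ht.
        have h1 : sval h t1 = 0 by rewrite hE; apply: clamp_le0; rewrite subrr mulr0.
        have := ML_mono h _ _ ht; have /andP[hb0 _] := ML_range h tb; lra.
      have := ML_mono y _ _ ht; rewrite -/r1; lra.
    have := @phi_ge y h b tb htb; lra.
rewrite (_ : eval env (FSup 2 _) = sup (range (fun g : ML R L => eval (upd env 2 g) (chiF α β c1 c2)))) //.
apply: (lt_le_trans key); apply: ub_le_sup; [exact: chi_ub | by exists h].
Qed.

Lemma psi_zero (env : nat -> ML R L) t2 α β c1 c2 :
  (ratr (sval β) : R) - ratr (sval c2) <= ratr (sval c1) ->
  ratr (sval α) - ratr (sval c1) <= sval (env 0%N) t2 ->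
  sval (env 1%N) t2 <= ratr (sval c2) ->
  eval env (FSup 2 (chiF α β c1 c2)) = 0.
Proof.
move=> h1 h2 h3.
have /andP[k10 k11] := ratr01 c1; have /andP[k20 k21] := ratr01 c2.
have z : forall g, eval (upd env 2 g) (chiF α β c1 c2) = 0.
  move=> g; rewrite eval_chi !phi_const ?ratr01 //; apply: chiv_zero.
  set A := phi_val g (env 0%N) _; set B := phi_val (env 1%N) g _.
  case: (leP (A / 2) (ratr (sval c1) / 2)) => hA; first by left.
  case: (leP (B / 2) (ratr (sval c2) / 2)) => hB; first by right.
  exfalso.
  have hA' : ratr (sval c1) < A by lra.
  have hB' : ratr (sval c2) < B by lra.
  have [ta [hta ga]] := @phi_gt g (env 0%N) _ _ k10 hA'.
  have [tb [htb gb]] := @phi_gt (env 1%N) g _ _ k20 hB'.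
  have tba : (tb < ta)%O.
    rewrite ltNge; apply/negP => /(ML_mono g) hg; lra.
  have hx := ML_mono (env 0%N) _ _ (ltW tba).
  case/orP: (le_total tb t2) => ht.
    have := ML_mono (env 1%N) _ _ ht; lra.
  have := ML_mono (env 0%N) _ _ ht; lra.
rewrite (_ : eval env (FSup 2 _) = sup (range (fun g : ML R L => eval (upd env 2 g) (chiF α β c1 c2)))) //.
apply/eqP; rewrite eq_le; apply/andP; split.
  apply: ge_sup; first by exists 0, (env 0%N); [|exact: z].
  move=> _ [g _ <-]; change (eval (upd env 2 g) (chiF α β c1 c2) <= 0).
  by rewrite z.
by apply: ub_le_sup; [exact: chi_ub | exists (env 0%N); [|exact: z]].
Qed.

Lemma rat01 (q : rat) : 0 <= (ratr q : R) <= 1 -> 0 <= q <= 1.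
Proof.
by rewrite -[X in (X <= _) && _](rmorph0 (@ratr R)) -(rmorph1 (@ratr R)) !ler_rat.
Qed.

Lemma distinguish (env1 env2 : nat -> ML R L) t1 t2 :
  sval (env1 0%N) t1 < sval (env2 0%N) t2 ->
  sval (env2 1%N) t2 < sval (env1 1%N) t1 ->
  exists α β c1 c2, 0 < eval env1 (FSup 2 (chiF α β c1 c2)) /\
                    eval env2 (FSup 2 (chiF α β c1 c2)) = 0.
Proof.
have /andP[r10 r11] := ML_range (env1 0%N) t1.
have /andP[r20 r21] := ML_range (env1 1%N) t1.
have /andP[s10 s11] := ML_range (env2 0%N) t2.
have /andP[s20 s21] := ML_range (env2 1%N) t2.
move: r10 r11 r20 r21 s10 s11 s20 s21.
set r1 := sval (env1 0%N) t1; set r2 := sval (env1 1%N) t1.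
set s1 := sval (env2 0%N) t2; set s2 := sval (env2 1%N) t2.
move=> r10 r11 r20 r21 s10 s11 s20 s21 rs1 rs2.
pose e := (s1 - r1) / 3.
have e3 : e * 3 = s1 - r1 by rewrite /e divfK // pnatr_eq0.
have [q2] := rat_in_itvoo rs2; rewrite in_itv /= => /andP[q2a q2b].
have : ratr q2 < Num.min r2 (ratr q2 + e) by rewrite lt_min q2b /=; lra.
move/rat_in_itvoo => [qb]; rewrite in_itv /= lt_min => /andP[qb1 /andP[qb2 qb3]].
have : r1 + 2 * e < s1 by lra.
move/rat_in_itvoo => [qa]; rewrite in_itv /= => /andP[qa1 qa2].
have hc1 : ratr (qb - q2) = ratr qb - ratr q2 :> R by rewrite rmorphB.
have p2 : 0 <= q2 <= 1 by apply: rat01; apply/andP; split; lra.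
have pb : 0 <= qb <= 1 by apply: rat01; apply/andP; split; lra.
have pa : 0 <= qa <= 1 by apply: rat01; apply/andP; split; lra.
have p1 : 0 <= qb - q2 <= 1 by apply: rat01; rewrite hc1; apply/andP; split; lra.
exists (exist _ qa pa), (exist _ qb pb), (exist _ (qb - q2) p1), (exist _ q2 p2).
split.
  apply: (@psi_pos env1 t1 _ _ _ _ (e / 2)) => /=; rewrite ?hc1 -/r1 -/r2; lra.
apply: (@psi_zero env2 t2) => /=; rewrite ?hc1 -/s1 -/s2; lra.
Qed.

End Aux.

Lemma fv_psi α β c1 c2 : all (fun k => (k < 2)%N) (fv (FSup 2 (chiF α β c1 c2))).
Proof. reflexivity. Qed.

Lemma mono_of_betw {dI : Order.disp_t} (I : orderType dI) (R : realType) (a : I -> R) :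
  (forall i j k, (i < j)%O -> (j < k)%O ->
     ~ (a i < a j /\ a k < a j) /\ ~ (a j < a i /\ a j < a k)) ->
  (forall i j : I, (i <= j)%O -> a i <= a j) \/
  (forall i j : I, (i <= j)%O -> a j <= a i).
Proof.
move=> Bt.
have L1 i j r : (i < j)%O -> a j < a i -> (r < i)%O -> a i <= a r.
  move=> ij ji ri; rewrite leNgt; apply/negP => h.
  by case: (Bt r i j ri ij) => /(_ (conj h ji)).
have R1 i j r : (i < j)%O -> a j < a i -> (j < r)%O -> a r <= a j.
  move=> ij ji jr; rewrite leNgt; apply/negP => h.
  by case: (Bt i j r ij jr) => _ /(_ (conj ji h)).
have R1' i j r : (i < j)%O -> a j < a i -> (j <= r)%O -> a r <= a j.
  move=> ij ji; rewrite le_eqVlt => /orP[/eqP <-|jr]; [exact: lexx | exact: R1 i j r ij ji jr].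
have H i j r : (i < j)%O -> a j < a i -> (r < j)%O -> a j <= a r.
  move=> ij ji rj; case: (ltgtP r i) => ri.
  - by have := L1 i j r ij ji ri; lra.
  - rewrite leNgt; apply/negP => h.
    by case: (Bt i r j ri rj) => _ /(_ (conj (lt_trans h ji) h)).
  - by rewrite ri; apply: ltW.
have [drop|nodrop] := pselect (exists i j, (i < j)%O /\ a j < a i); last first.
  left => i j; rewrite le_eqVlt => /orP[/eqP -> //|ij].
  rewrite leNgt; apply/negP => h; apply: nodrop; by exists i, j.
have [rise|norise] := pselect (exists i j, (i < j)%O /\ a i < a j); last first.
  right => i j; rewrite le_eqVlt => /orP[/eqP -> //|ij].
  rewrite leNgt; apply/negP => h; apply: norise; by exists i, j.
exfalso; case: drop => i [j [ij ji]]; case: rise => k [l [kl kl']].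
case: (ltP k j) => kj.
  have hk := H i j k ij ji kj; case: (leP j l) => jl.
    by have := R1' i j l ij ji jl; clear -hk kl'; lra.
  case: (leP (a l) (a j)) => lj; first by clear -hk kl' lj; lra.
  by have := L1 l j k jl lj kl; clear -kl'; lra.
have kj' := R1' i j k ij ji kj.
have ik : (i < k)%O by apply: (lt_le_trans ij).
have ki : a k < a i by clear -kj' ji; lra.
by have := R1 i k l ik ki kl; clear -kl'; lra.
Qed.


Local Close Scope classical_set_scope.

Theorem mainTheorem18 (R : realType) (dL : Order.disp_t) (L : orderType dL)
  (dI : Order.disp_t) (I : orderType dI) (f : I -> ML R L) (a : I -> R) :
  linear_continuum_with_endpoints L ->
  indiscernible f ->
  (exists t : L, forall i, a i = sval (f i) t) ->
  (forall i j : I, (i <= j)%O -> a i <= a j) \/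
  (forall i j : I, (i <= j)%O -> a j <= a i).
Proof.
move=> [dense lub [[bot hbot] [top htop]]] ind [t ha].
have contra i j k l : (i < j)%O -> (k < l)%O ->
    sval (f i) t < sval (f k) t -> sval (f l) t < sval (f j) t -> False.
  move=> ij kl d1 d2.
  pose s1 := fun n : nat => if n == 0%N then i else j.
  pose s2 := fun n : nat => if n == 0%N then k else l.
  have [α [β [c1 [c2 [H1 H2]]]]] :=
    @distinguish R dL L dense lub bot top hbot htop (fun n => f (s1 n)) (fun n => f (s2 n)) t t d1 d2.
  have := ind (FSup 2 (chiF α β c1 c2)) 2%N s1 s2 (fv_psi _ _ _ _).
  have inc1 : forall x y, (x < y < 2)%N -> (s1 x < s1 y)%O.
    move=> x y /andP[xy]; case: y xy => [|[|y]] //; case: x => [|x] // _ _; exact: ij.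
  have inc2 : forall x y, (x < y < 2)%N -> (s2 x < s2 y)%O.
    move=> x y /andP[xy]; case: y xy => [|[|y]] //; case: x => [|x] // _ _; exact: kl.
  move/(_ inc1 inc2) => E; move: H1; rewrite E H2; by rewrite ltxx.
apply: mono_of_betw => i j k ij jk; split.
  by move=> [h1 h2]; apply: (contra i j j k ij jk); rewrite -!ha.
by move=> [h1 h2]; apply: (contra j k i j jk ij); rewrite -!ha.
Qed.
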